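(* Let $X$ be an $\omega$ type $P$-space. Then $\Sigma\mathcal O(X)$ is sober.
   Context: $\mathcal O(X)$ is the lattice of open subsets of $X$ ordered by inclusion, and $\Sigma\mathcal O(X)$ is this lattice with its Scott topology (a set $U$ is Scott open iff it is an upper set and for every directed $D$, $\bigvee D\in U$ implies $D\cap U\neq\emptyset$). A space is an $\omega$ type space if it has a subbase consisting of countable subsets; it is a $P$-space if countable intersections of open sets are open. A $T_0$ space is sober if every irreducible closed set equals $\overline{\{x\}}$ for some point $x$. *)

(* Defs.v *)
From HB Require Import structures.
From mathcomp Require Import all_boot all_order.
From mathcomp Require Import boolp classical_sets cardinality topology.
Set Implicit Arguments. Unset Strict Implicit. Unset Printing Implicit Defensive.
Local Open Scope classical_set_scope.

(* A topology on a type T given by its family of open sets. *)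
Section GenTop.
Variables (T : Type) (op : set T -> Prop).

Definition gclosed (C : set T) : Prop := op (~` C).

Definition gclosure (A : set T) : set T :=
  fun x => forall C, gclosed C -> A `<=` C -> C x.

Definition gT0 : Prop :=
  forall x y : T, (forall U, op U -> (U x <-> U y)) -> x = y.

Definition girreducible (C : set T) : Prop :=
  C !=set0 /\
  forall A B, gclosed A -> gclosed B -> C `<=` A `|` B -> C `<=` A \/ C `<=` B.

Definition gsober : Prop :=
  gT0 /\ forall C, gclosed C -> girreducible C ->
    exists x, C = gclosure [set x].
End GenTop.

Definition OX (X : topologicalType) := {U : set X | open U}.

Definition OX_le (X : topologicalType) (U V : OX X) : Prop :=
  proj1_sig U `<=` proj1_sig V.

Definition OX_directed (X : topologicalType) (D : set (OX X)) : Prop :=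
  D !=set0 /\
  forall U V, D U -> D V -> exists W, D W /\ OX_le U W /\ OX_le V W.

Definition OX_join (X : topologicalType) (D : set (OX X)) : set X :=
  \bigcup_(U in D) proj1_sig U.

Definition scott_open (X : topologicalType) (S : set (OX X)) : Prop :=
  (forall U V, S U -> OX_le U V -> S V) /\
  (forall D, OX_directed D ->
     forall J : OX X, proj1_sig J = OX_join D -> S J ->
     exists U, D U /\ S U).

(* omega type: a subbase consisting of countable sets *)
Definition omega_type (X : topologicalType) : Prop :=
  exists B : set (set X),
    (forall A, B A -> open A /\ countable A) /\
    (forall U : set X, open U -> forall x, U x ->
       exists F : set (set X), finite_set F /\ F `<=` B /\
         (\bigcap_(A in F) A) x /\ (\bigcap_(A in F) A) `<=` U).

Definition P_space (X : topologicalType) : Prop :=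
  forall U : nat -> set X, (forall n, open (U n)) -> open (\bigcap_n U n).

(* Main.v *)
Require Import Defs.
From mathcomp Require Import all_boot all_order.
From mathcomp Require Import boolp classical_sets cardinality topology.
Local Open Scope classical_set_scope.

Lemma minnbhd (X : topologicalType) : omega_type X -> P_space X ->
  forall x : X, exists m : set X, open m /\ m x /\
    forall U, open U -> U x -> m `<=` U.
Proof.
move=> [B [HB Hsub]] HP x.
have [[A [BA Ax]]|nA] := pselect (exists A, B A /\ A x); last first.
  exists setT; split; first exact: openT.
  split=> // U oU Ux.
  have [F [_ [FB [Fx FU]]]] := Hsub U oU x Ux.
  move=> y _; apply: FU => C FC.
  by exfalso; apply: nA; exists C; split; [exact: FB|exact: Fx].
have [oA /countable_injP [f finj]] := HB A BA.
have Hn : forall n : nat, exists W : set X, open W /\ W x /\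
   forall y, A y -> f y = n -> (exists V, open V /\ V x /\ ~ V y) -> ~ W y.
  move=> n.
  have [[y [Ay [fy [V [oV [Vx nVy]]]]]]|nex] := pselect
    (exists y, A y /\ f y = n /\ exists V, open V /\ V x /\ ~ V y).
    exists V; split=> //; split=> // y' Ay' fy' _.
    have -> : y' = y by apply: finj; rewrite ?inE //; rewrite fy fy'.
    exact: nVy.
  exists setT; split; first exact: openT; split=> // y Ay fy ex.
  by exfalso; apply: nex; exists y.
have [W HW] := choice Hn.
exists (A `&` \bigcap_n W n); split.
  apply: openI => //; apply: HP => n; exact: (HW n).1.
split.
  by split=> // n _; exact: (HW n).2.1.
move=> U oU Ux y [Ay Wy].
apply: contrapT => nUy.
apply: ((HW (f y)).2.2 y Ay erefl); last exact: Wy.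
by exists U.
Qed.

Theorem corollary4p6 (X : topologicalType) :
  omega_type X -> P_space X -> gsober (@scott_open X).
Proof.
move=> Hom HP; split.
  move=> [u hu] [v hv] H.
  suff uv : u = v by subst v; congr exist; exact: Prop_irrelevance.
  have key : forall (a b : OX X), (forall S, scott_open S -> (S a <-> S b)) ->
      proj1_sig a `<=` proj1_sig b.
    move=> a b Hab; apply: contrapT => nab.
    have Sop : scott_open (fun W : OX X => ~ proj1_sig W `<=` proj1_sig b).
      split.
        move=> U V nU UV UVb; apply: nU => z Uz; exact/UVb/UV.
      move=> D _ J HJ nJ; apply: contrapT => nex; apply: nJ.
      rewrite HJ => z [U DU Uz]; apply: contrapT => nbz.
      apply: nex; exists U; split=> //; move=> Ub; exact/nbz/Ub.
    have := (Hab _ Sop).1 nab; apply; done.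
  rewrite eqEsubset; split.
    exact: (key (exist _ u hu) (exist _ v hv) H).
  apply: (key (exist _ v hv) (exist _ u hu)) => S HS; split; apply (H S HS).
move=> C Ccl [[c0 Cc0] Cirr].
have Cdown : forall a b : OX X, C b -> OX_le a b -> C a.
  move=> a b Cb ab; apply: contrapT => nCa.
  have := Ccl.1 a b nCa ab; rewrite /setC; apply; exact: Cb.
pose up (U : OX X) := fun W : OX X => OX_le U W.
pose D := fun U : OX X => (exists c, C c /\ OX_le U c) /\ scott_open (up U).
have sopen : open (\bigcup_(c in C) proj1_sig c).
  by apply: bigcup_open => c _; exact: (proj2_sig c).
pose s : OX X := exist _ _ sopen.
have Ds : OX_directed D.
  split.
    exists (exist _ set0 open0); split.
      by exists c0; split=> // z.
    split.
      by move=> U V _ _ z.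
    move=> D' [[W DW] _] J _ _; exists W; split=> // z.
  move=> U1 U2 [[c1 [Cc1 U1c1]] HU1] [[c2 [Cc2 U2c2]] HU2].
  have oU : open (proj1_sig U1 `|` proj1_sig U2).
    by apply: openU; [exact: (proj2_sig U1)|exact: (proj2_sig U2)].
  pose U : OX X := exist _ _ oU.
  exists U; split; last by split=> z zU; [left|right].
  split.
    apply: contrapT => nex.
    have cA : gclosed (@scott_open X) (~` up U1) by rewrite /gclosed setCK.
    have cB : gclosed (@scott_open X) (~` up U2) by rewrite /gclosed setCK.
    have cov : C `<=` (~` up U1) `|` (~` up U2).
      move=> c Cc; apply: contrapT; rewrite /setU => nor.
      apply: nex; exists c; split=> //.
      have h1 : up U1 c by apply: contrapT => n1; apply: nor; left.
      have h2 : up U2 c by apply: contrapT => n2; apply: nor; right.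
      by move=> z [/h1|/h2].
    have [h|h] := Cirr _ _ cA cB cov.
      by apply: (h c1 Cc1).
    by apply: (h c2 Cc2).
  split.
    move=> V W UV VW z Vz; exact/VW/UV.
  move=> D' HD' J HJ UJ.
  have HU1J : up U1 J by move=> z z1; apply: UJ; left.
  have HU2J : up U2 J by move=> z z1; apply: UJ; right.
  have [V1 [DV1 V1u]] := HU1.2 D' HD' J HJ HU1J.
  have [V2 [DV2 V2u]] := HU2.2 D' HD' J HJ HU2J.
  have [V [DV [V1V V2V]]] := HD'.2 V1 V2 DV1 DV2.
  exists V; split=> // z [/V1u/V1V|/V2u/V2V] //.
have joinD : proj1_sig s = OX_join D.
  rewrite eqEsubset; split.
    move=> z [c Cc cz].
    have [m [om [mz mmin]]] := @minnbhd X Hom HP z.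
    pose M : OX X := exist _ m om.
    exists M => //; split.
      by exists c; split=> //; apply: mmin => //; exact: (proj2_sig c).
    split.
      move=> V W MV VW y My; exact/VW/MV.
    move=> D' HD' J HJ MJ.
    have Jz : proj1_sig J z by exact: MJ.
    rewrite HJ in Jz; case: Jz => W DW Wz.
    exists W; split=> //; apply: mmin => //; exact: (proj2_sig W).
  move=> z [U [[c [Cc Uc]] _] Uz]; exists c => //; exact: Uc.
have Cs : C s.
  apply: contrapT => nCs.
  have [U [[[c [Cc Uc]] _] nCU]] := Ccl.2 D Ds s joinD nCs.
  by apply: nCU; apply: (Cdown U c).
exists s; rewrite eqEsubset; split.
  move=> c Cc K Kcl Ks; apply: contrapT => nKc.
  have := Kcl.1 c s nKc; rewrite /setC; apply; last exact: Ks.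
  by move=> z cz; exists c.
by move=> y; apply; [exact: Ccl| move=> z ->].
Qed.
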